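(* Let $G$ be a finite, simple, undirected, connected graph with $n$ vertices and let $\ell$ be an integer with $1\leq \ell\leq n-1$. Then $\beta_\ell^s(G)\geq \ell+1$.
   Context: $d$ is the shortest-path distance; for nonempty $X\subseteq V(G)$, $d(s,X)=\min_{x\in X}d(s,x)$; for $S=\{s_1,\dots,s_k\}$, $\mathcal{D}_S(X)=(d(s_1,X),\dots,d(s_k,X))$. $S\subseteq V(G)$ is an $\ell$-solid-resolving set if $\mathcal{D}_S(X)\neq\mathcal{D}_S(Y)$ for all distinct nonempty $X,Y\subseteq V(G)$ with $|X|\leq\ell$ ($Y$ of arbitrary size). $\beta_\ell^s(G)$, the $\ell$-solid-metric dimension, is the minimum cardinality of an $\ell$-solid-resolving set of $G$. *)

(* Defs.v *)
From mathcomp Require Import all_boot.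
Set Implicit Arguments. Unset Strict Implicit. Unset Printing Implicit Defensive.

Definition simple_graph (T : finType) (e : rel T) : Prop :=
  symmetric e /\ irreflexive e.

Definition connected_graph (T : finType) (e : rel T) : Prop :=
  forall x y : T, connect e x y.

Fixpoint ball (T : finType) (e : rel T) (x : T) (k : nat) : {set T} :=
  match k with
  | 0 => [set x]
  | k'.+1 => ball e x k' :|: [set y | [exists z in ball e x k', e z y]]
  end.

(* shortest-path distance: least k with y in ball e x k (searched up to #|T|,
   which suffices in a connected graph) *)
Definition dist (T : finType) (e : rel T) (x y : T) : nat :=
  find (fun k => y \in ball e x k) (iota 0 #|T|).

Definition dist_set (T : finType) (e : rel T) (s : T) (X : {set T}) : nat :=
  \big[minn/#|T|]_(x in X) dist e s x.

Definition solid_resolving (T : finType) (e : rel T) (l : nat) (S : {set T}) : Prop :=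
  forall X Y : {set T}, X != set0 -> Y != set0 -> X != Y -> #|X| <= l ->
    exists2 s, s \in S & dist_set e s X <> dist_set e s Y.

(* Main.v *)
Require Import Defs.
From mathcomp Require Import all_boot zify.

Lemma bigmin_le_seq (I : eqType) (r : seq I) (P : pred I) (F : I -> nat) d i :
  i \in r -> P i -> \big[minn/d]_(j <- r | P j) F j <= F i.
Proof.
elim: r => [|a r IH] //=; rewrite inE big_cons => /orP [/eqP ->|Hi] Pi.
  by rewrite Pi geq_minl.
case: (P a); last exact: IH.
by rewrite geq_min IH ?orbT.
Qed.

Lemma dist_self (T : finType) (e : rel T) (s : T) : dist e s s = 0.
Proof.
rewrite /dist.
have : 0 < #|T| by apply/card_gt0P; exists s.
by case: #|T| => [|n] //= _; rewrite inE eqxx.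
Qed.

Lemma dist_set0 (T : finType) (e : rel T) (s : T) (X : {set T}) :
  s \in X -> dist_set e s X = 0.
Proof.
move=> sX; apply/eqP; rewrite -leqn0 /dist_set -(dist_self _ e s).
by apply: bigmin_le_seq => //; rewrite mem_index_enum.
Qed.

Theorem mainTheorem5 (T : finType) (e : rel T) (l : nat) :
  simple_graph e -> connected_graph e ->
  1 <= l <= #|T| - 1 ->
  forall S : {set T}, solid_resolving e l S -> l.+1 <= #|S|.
Proof.
move=> _ _ /andP [l1 ln] S HS.
rewrite ltnNge; apply/negP => Sl.
have Sn : #|S| < #|T| by lia.
have [v vS] : exists v, v \notin S.
  apply/existsP; rewrite -negb_forall; apply/negP => /forallP H.
  suff : #|T| <= #|S| by rewrite leqNgt Sn.
  by apply/subset_leq_card/subsetP => x _; apply: H.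
case: (set_0Vmem S) => [S0|[s sS]].
  have [w wv] : exists w, w != v.
    apply/existsP; rewrite -negb_forall; apply/negP => /forallP H.
    move: Sn; rewrite S0 cards0 => /(ltnW) .
    have : #|T| <= 1.
      rewrite -(card1 v); apply/subset_leq_card/subsetP => x _.
      by rewrite inE; apply: H.
    move=> H1 _.
    lia.
  have h1 : [set w] != set0 by apply/set0Pn; exists w; rewrite inE.
  have h2 : [set v] != set0 by apply/set0Pn; exists v; rewrite inE.
  have h3 : [set w] != [set v].
    apply/negP => /eqP/setP/(_ w); rewrite !inE eqxx => /esym/eqP.
    by move=> E; move: wv; rewrite E eqxx.
  have h4 : #|[set w]| <= l by rewrite cards1.
  have [s' s'S _] := HS _ _ h1 h2 h3 h4.
  by move: s'S; rewrite S0 inE.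
have h1 : S != set0 by apply/set0Pn; exists s.
have h2 : v |: S != set0 by apply/set0Pn; exists v; apply/setU1P; left.
have h3 : S != v |: S.
  apply/negP => /eqP/setP/(_ v); rewrite !inE eqxx /= (negbTE vS).
  done.
have [s' s'S] := HS _ _ h1 h2 h3 Sl.
by rewrite !dist_set0 // inE s'S orbT.
Qed.
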